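(* Let $f:\{0,1\}^n\to\{0,1\}$ be a boolean function such that $f(x)=f(\bar x)$ for all $x\in\{0,1\}^n$, where $\bar x$ is the bitwise negation of $x$. Then $Q_E^{na}(f)\le n-1$.
   Context: Nonadaptive exact quantum query model: let $\mathcal H_{\rm in}$ have orthonormal basis $|0\rangle,\dots,|n\rangle$ and let the oracle $O_x$ act by $|i\rangle\mapsto(-1)^{x_i}|i\rangle$ with convention $x_0=0$. A nonadaptive quantum algorithm making $k$ queries consists of an input-independent state $|\psi\rangle\in\mathcal H_{\rm in}^{\otimes k}\otimes\mathcal H_{\rm work}$ (with $\mathcal H_{\rm work}$ a finite-dimensional workspace), to which $O_x^{\otimes k}\otimes I$ is applied, followed by an input-independent two-outcome measurement with outcomes labelled $0,1$. It computes $f$ exactly if for every $x$ the outcome is $f(x)$ with probability $1$. $Q_E^{na}(f)$ is the minimum such $k$. *)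

(* Defs.v *)
From HB Require Import structures.
From mathcomp Require Import all_boot all_order all_algebra.
Set Implicit Arguments. Unset Strict Implicit. Unset Printing Implicit Defensive.
Import Order.TTheory GRing.Theory Num.Theory.
Local Open Scope ring_scope.

Definition bnot (n : nat) (x : {ffun 'I_n -> bool}) : {ffun 'I_n -> bool} :=
  [ffun i => ~~ x i].

(* Oracle index set {0,...,n} = 'I_n.+1; convention x_0 = 0 and
   x_i (i >= 1) is the (i-1)-th bit of x (0-based ffun). *)
Definition xext (n : nat) (x : {ffun 'I_n -> bool}) (i : 'I_n.+1) : bool :=
  match unlift ord0 i with None => false | Some j => x j end.

(* Basis of H_in^{(x)k} (x) H_work, with dim H_work = d. *)
Definition qbasis (n k d : nat) : finType :=
  ({ffun 'I_k -> 'I_n.+1} * 'I_d)%type.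

Section QModel.
Variable C : numClosedFieldType.
Variables n k d : nat.
Local Notation T := (qbasis n k d).

Definition qdot (u v : T -> C) : C := \sum_(t : T) (u t)^* * v t.

Definition unit_state (psi : T -> C) : Prop := qdot psi psi = 1.

Definition qform (M : T -> T -> C) (v : T -> C) : C :=
  \sum_(a : T) \sum_(b : T) (v a)^* * M a b * v b.

Definition psd_op (M : T -> T -> C) : Prop := forall v : T -> C, 0 <= qform M v.

Definition two_outcome_povm (M : bool -> T -> T -> C) : Prop :=
  psd_op (M false) /\ psd_op (M true) /\
  forall a b : T, M false a b + M true a b = (a == b)%:R.

(* (O_x^{(x)k} (x) I) psi *)
Definition apply_oracle (x : {ffun 'I_n -> bool}) (psi : T -> C) : T -> C :=
  fun t => (\prod_(j < k) (if xext x (t.1 j) then -1 else 1)) * psi t.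

Definition outcome_prob (M : bool -> T -> T -> C) (b : bool) (v : T -> C) : C :=
  qform (M b) v.

Definition na_computes_exactly (f : {ffun 'I_n -> bool} -> bool)
  (psi : T -> C) (M : bool -> T -> T -> C) : Prop :=
  unit_state psi /\ two_outcome_povm M /\
  forall x, outcome_prob M (f x) (apply_oracle x psi) = 1.
End QModel.

Definition na_exact_alg (C : numClosedFieldType) (n : nat)
  (f : {ffun 'I_n -> bool} -> bool) (k : nat) : Prop :=
  exists (d : nat) (psi : qbasis n k d -> C) (M : bool -> qbasis n k d -> qbasis n k d -> C),
    na_computes_exactly f psi M.

Definition QEna_le (C : numClosedFieldType) (n : nat)
  (f : {ffun 'I_n -> bool} -> bool) (m : nat) : Prop :=
  exists k : nat, (k <= m)%N /\ na_exact_alg C f k.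

(* Main.v *)
Require Import Defs.
From HB Require Import structures.
From mathcomp Require Import all_boot all_order all_algebra.
From mathcomp Require Import ring.
Import Order.TTheory GRing.Theory Num.Theory.
Local Open Scope ring_scope.
Set Implicit Arguments. Unset Strict Implicit.

Section Alg.
Variable C : numClosedFieldType.
Variable m : nat.

Definition hh : C := sqrtC (2^-1).

Lemma hh_real : hh^* = hh.
Proof. apply: conj_Creal; apply: ger0_real; by rewrite sqrtC_ge0 invr_ge0 ler0n. Qed.

Lemma hh2 : hh * hh = 2^-1.
Proof. by rewrite -expr2 sqrtCK. Qed.

Lemma half2 : 2^-1 + 2^-1 = 1 :> C.
Proof. by rewrite [RHS](splitr 1) div1r. Qed.

Definition pp : 'I_m.+2 := lift ord0 ord0.
Definition qq (j : 'I_m) : 'I_m.+2 := lift ord0 (lift ord0 j).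

Lemma pq j : (pp == qq j) = false.
Proof. by rewrite /pp /qq (inj_eq (@lift_inj _ _)); apply/negbTE; apply: neq_lift. Qed.

Definition uu j (r e : 'I_m.+2) : C :=
  if ((r == pp) || (r == qq j)) && ((e == pp) || (e == qq j))
  then (if (r == qq j) && (e == qq j) then - hh else hh) else (r == e)%:R.

Lemma uu_real j r e : (uu j r e)^* = uu j r e.
Proof. rewrite /uu; case: ifP => _; first case: ifP => _.
- by rewrite rmorphN; congr (- _); exact: hh_real.
- by rewrite hh_real.
- by rewrite rmorph_nat.
Qed.

Lemma sum_pq (F : 'I_m.+2 -> C) j :
  (forall e, e != pp -> e != qq j -> F e = 0) ->
  \sum_e F e = F pp + F (qq j).
Proof.
move=> H; rewrite (bigD1 pp) //= (bigD1 (qq j)) //= big1 ?addr0 // => e /andP [] ? ?; by apply: H.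
Qed.

Lemma uu_pp_pp j : uu j pp pp = hh.
Proof. by rewrite /uu !eqxx /= ?(eq_sym (qq j) pp) ?pq ?orbT ?andbT /= ?eqxx. Qed.
Lemma uu_pp_qq j : uu j pp (qq j) = hh.
Proof. by rewrite /uu !eqxx /= ?(eq_sym (qq j) pp) ?pq ?orbT ?andbT /= ?eqxx. Qed.
Lemma uu_qq_pp j : uu j (qq j) pp = hh.
Proof. by rewrite /uu !eqxx /= ?(eq_sym (qq j) pp) ?pq ?orbT ?andbT /= ?eqxx. Qed.
Lemma uu_qq_qq j : uu j (qq j) (qq j) = - hh.
Proof. by rewrite /uu !eqxx /= ?(eq_sym (qq j) pp) ?pq ?orbT ?andbT /= ?eqxx. Qed.
Lemma uu_pp_o j e : e != pp -> e != qq j -> uu j pp e = 0.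
Proof.
move=> a b; rewrite /uu; case: ifP => [/andP [_ /orP [] /eqP E]|_].
- by rewrite E eqxx in a.
- by rewrite E eqxx in b.
- apply/eqP; rewrite pnatr_eq0 eqb0; apply/eqP => E.
  by move: a b; rewrite -E ?eqxx //= => _; rewrite eq_sym pq.
Qed.
Lemma uu_qq_o j e : e != pp -> e != qq j -> uu j (qq j) e = 0.
Proof.
move=> a b; rewrite /uu; case: ifP => [/andP [_ /orP [] /eqP E]|_].
- by rewrite E eqxx in a.
- by rewrite E eqxx in b.
- apply/eqP; rewrite pnatr_eq0 eqb0; apply/eqP => E.
  by move: a b; rewrite -E ?eqxx //= => _; rewrite eq_sym pq.
Qed.

Lemma uu_unit j e e' : \sum_r (uu j r e)^* * uu j r e' = (e == e')%:R.
Proof.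
have pqf := pq j.
case Ee: ((e == pp) || (e == qq j)).
- rewrite (@sum_pq _ j); last first.
    move=> r rp' rq'.
    have rp : (r == pp) = false by apply: negbTE.
    have rq : (r == qq j) = false by apply: negbTE.
    have -> : uu j r e = 0.
      rewrite /uu rp rq /=; case: (r =P e) Ee => [<-|//]; by rewrite rp rq.
    by rewrite rmorph0 mul0r.
  rewrite !uu_real.
  have [E|E] : e = pp \/ e = qq j by case/orP: Ee => /eqP ->; [left|right].
  + rewrite E uu_pp_pp uu_qq_pp.
    case: (e' =P pp) => [->|/eqP ep]; first by rewrite uu_pp_pp uu_qq_pp eqxx hh2 half2.
    case: (e' =P qq j) => [->|/eqP eq]; first by rewrite uu_pp_qq uu_qq_qq pqf mulrN hh2 subrr.
    by rewrite uu_pp_o // uu_qq_o // mulr0 addr0 eq_sym (negbTE ep).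
  + rewrite E uu_pp_qq uu_qq_qq.
    case: (e' =P pp) => [->|/eqP ep]; first by rewrite uu_pp_pp uu_qq_pp eq_sym pqf mulNr hh2 subrr.
    case: (e' =P qq j) => [->|/eqP eq]; first by rewrite uu_pp_qq uu_qq_qq eqxx mulNr mulrN opprK hh2 half2.
    by rewrite uu_pp_o // uu_qq_o // !mulr0 addr0 eq_sym (negbTE eq).
- rewrite (bigD1 e) //= big1; last first.
    move=> r re; have -> : uu j r e = 0.
      by rewrite /uu Ee andbF; apply/eqP; rewrite pnatr_eq0 eqb0.
    by rewrite rmorph0 mul0r.
  rewrite uu_real addr0.
  have H x : uu j e x = (e == x)%:R by rewrite /uu Ee.
  by rewrite !H eqxx mul1r.
Qed.

Lemma uu_o e j s : s != pp -> s != qq j -> (e == pp) || (e == qq j) -> uu j s e = 0.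
Proof.
move=> a b Ee; rewrite /uu; case: ifP => [/andP [/orP [] /eqP E _]|_].
- by rewrite E eqxx in a.
- by rewrite E eqxx in b.
- apply/eqP; rewrite pnatr_eq0 eqb0; apply/eqP => E.
  by move: a b; rewrite E; case/orP: Ee => /eqP ->; rewrite eqxx.
Qed.

Lemma sumT (F : {ffun 'I_m -> 'I_m.+2} -> C) :
  \sum_(a : qbasis m.+1 m 1) F a.1 = \sum_f F f.
Proof.
rewrite /qbasis -(pair_bigA _ (fun f (_ : 'I_1) => F f)) /=.
by apply: eq_bigr => f _; rewrite big_ord1.
Qed.

Lemma prod_eq (f g : {ffun 'I_m -> 'I_m.+2}) :
  \prod_j ((f j == g j)%:R : C) = (f == g)%:R.
Proof.
case: (f =P g) => [->|/eqP ne]; first by rewrite big1 // => j _; rewrite eqxx.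
have /existsP [j Hj] : [exists j, f j != g j].
  apply: contraNT ne => /existsPn H; apply/eqP/ffunP => j; apply/eqP.
  by move: (H j); rewrite negbK.
by rewrite (bigD1 j) //= (negbTE Hj) mul0r.
Qed.

Lemma qform_rows (T Z : finType) (c : Z -> C) (W : Z -> T -> C) (v : T -> C) :
  \sum_a \sum_b (v a)^* * (\sum_z c z * ((W z a)^* * W z b)) * v b =
  \sum_z c z * ((\sum_a W z a * v a)^* * (\sum_b W z b * v b)).
Proof.
rewrite [RHS](eq_bigr (fun z => \sum_a \sum_b c z * ((W z a * v a)^* * (W z b * v b)))); last first.
  move=> z _; rewrite rmorph_sum mulr_suml mulr_sumr; apply: eq_bigr => a _.
  by rewrite mulr_sumr mulr_sumr.
rewrite [RHS]exchange_big; apply: eq_bigr => a _; rewrite [RHS]exchange_big; apply: eq_bigr => b _.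
rewrite mulr_sumr mulr_suml; apply: eq_bigr => z _; rewrite rmorphM; ring.
Qed.

Definition phi j (e : 'I_m.+2) : C := if (e == pp) || (e == qq j) then hh else 0.
Definition psi (a : qbasis m.+1 m 1) : C := \prod_(j < m) phi j (a.1 j).
Definition WW (z : {ffun 'I_m -> 'I_m.+2}) (a : qbasis m.+1 m 1) : C :=
  \prod_j uu j (z j) (a.1 j).
Definition decode (z : {ffun 'I_m -> 'I_m.+2}) : {ffun 'I_m.+1 -> bool} :=
  [ffun i => if unlift ord0 i is Some j then z j == qq j else false].
Definition MM (f : {ffun 'I_m.+1 -> bool} -> bool) (b : bool) (a a' : qbasis m.+1 m 1) : C :=
  \sum_(z : {ffun 'I_m -> 'I_m.+2}) (f (decode z) == b)%:R * ((WW z a)^* * WW z a').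

Lemma WW_unit a b : \sum_z (WW z a)^* * WW z b = (a == b)%:R.
Proof.
rewrite /WW.
under eq_bigr do rewrite rmorph_prod -big_split /=.
rewrite -(@bigA_distr_bigA C 0 1 *%R +%R _ _ (fun j r => (uu j r (a.1 j))^* * uu j r (b.1 j))).
under eq_bigr do rewrite uu_unit.
rewrite (prod_eq a.1 b.1).
case: a b => [a1 a2] [b1 b2]; by rewrite /= xpair_eqE (ord1 a2) (ord1 b2) eqxx andbT.
Qed.

Lemma MM_povm f : two_outcome_povm (MM f).
Proof.
have qf b v : qform (MM f b) v = \sum_z (f (decode z) == b)%:R *
   ((\sum_a WW z a * v a)^* * (\sum_a WW z a * v a)).
  by rewrite /qform -qform_rows.
split; [|split].
- move=> v; rewrite qf; apply: sumr_ge0 => z _; apply: mulr_ge0; first exact: ler0n.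
  by rewrite mulrC mul_conjC_ge0.
- move=> v; rewrite qf; apply: sumr_ge0 => z _; apply: mulr_ge0; first exact: ler0n.
  by rewrite mulrC mul_conjC_ge0.
- move=> a b; rewrite /MM -big_split /= -WW_unit; apply: eq_bigr => z _.
  by rewrite -mulrDl; case: (f (decode z)); rewrite /= ?add0r ?addr0 mul1r.
Qed.

Lemma psi_unit : unit_state psi.
Proof.
rewrite /unit_state /qdot /psi.
rewrite (sumT (fun g => (\prod_j phi j (g j))^* * \prod_j phi j (g j))).
under eq_bigr do rewrite rmorph_prod -big_split /=.
rewrite -(@bigA_distr_bigA C 0 1 *%R +%R _ _ (fun j r => (phi j r)^* * phi j r)).
apply: big1 => j _.
rewrite (@sum_pq _ j); last by move=> e /negbTE a /negbTE b; rewrite /phi a b rmorph0 mul0r.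
by rewrite /phi !eqxx ?orbT /= hh_real hh2 half2.
Qed.

Section Oracle.
Variable x : {ffun 'I_m.+1 -> bool}.
Definition sgb (b : bool) : C := if b then -1 else 1.
Definition tt j : 'I_m.+2 := if x ord0 == x (lift ord0 j) then pp else qq j.
Definition ttf : {ffun 'I_m -> 'I_m.+2} := [ffun j => tt j].

Lemma xext_pp : xext x pp = x ord0.
Proof. by rewrite /xext /pp liftK. Qed.
Lemma xext_qq j : xext x (qq j) = x (lift ord0 j).
Proof. by rewrite /xext /qq liftK. Qed.

Lemma reg j s : \sum_r uu j s r * (sgb (xext x r) * phi j r) = sgb (x ord0) * (s == tt j)%:R.
Proof.
rewrite (@sum_pq _ j); last by move=> e /negbTE a /negbTE b; rewrite /phi a b !mulr0.
rewrite xext_pp xext_qq /phi !eqxx ?orbT /= /tt.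
have pqf := pq j.
have h2 : hh * hh + hh * hh = 1 by rewrite hh2 half2.
case: (s =P pp) => [->|/eqP sp].
  rewrite uu_pp_pp uu_pp_qq.
  by case: (x ord0); case: (x (lift ord0 j)); rewrite /sgb /= ?eqxx ?pqf;
    rewrite -?h2 /=; ring.
case: (s =P qq j) => [->|/eqP sq].
  rewrite uu_qq_pp uu_qq_qq.
  by case: (x ord0); case: (x (lift ord0 j)); rewrite /sgb /= ?eqxx ?[qq j == pp]eq_sym ?pqf;
    rewrite -?h2 /=; ring.
rewrite !uu_o // ?eqxx ?orbT // !mul0r add0r.
by case: ifP => _; [rewrite (negbTE sp) | rewrite (negbTE sq)]; rewrite mulr0.
Qed.

Lemma Yz (z : {ffun 'I_m -> 'I_m.+2}) : \sum_a WW z a * apply_oracle x psi a =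
  \prod_j (sgb (x ord0) * (z j == tt j)%:R).
Proof.
have E a : WW z a * apply_oracle x psi a = \prod_j (uu j (z j) (a.1 j) * ((if xext x (a.1 j) then -1 else 1) * phi j (a.1 j))).
  by rewrite /apply_oracle /psi /WW -big_split -big_split.
rewrite (eq_bigr _ (fun a _ => E a)).
rewrite (sumT (fun g => \prod_j (uu j (z j) (g j) * ((if xext x (g j) then -1 else 1) * phi j (g j))))).
rewrite -(@bigA_distr_bigA C 0 1 *%R +%R _ _ (fun j r => uu j (z j) r * ((if xext x r then -1 else 1) * phi j r))).
by apply: eq_bigr => j _; rewrite -reg.
Qed.

Lemma Ysq (z : {ffun 'I_m -> 'I_m.+2}) : (\prod_j (sgb (x ord0) * (z j == tt j)%:R))^* *
   (\prod_j (sgb (x ord0) * (z j == tt j)%:R)) = (z == ttf)%:R.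
Proof.
rewrite rmorph_prod -big_split /= -prod_eq; apply: eq_bigr => j _.
rewrite ffunE rmorphM rmorph_nat.
by case: (x ord0); case: (z j == tt j); rewrite /sgb ?rmorphN1 ?rmorph1 /= ?mulr0 ?mul0r ?mulr1 // mulrN1 opprK.
Qed.

Lemma decode_tt : decode ttf = if x ord0 then bnot x else x.
Proof.
apply/ffunP => i; rewrite /decode ffunE.
case: unliftP => [j|] ->.
  rewrite ffunE /tt.
  case E0: (x ord0); case Ej: (x (lift ord0 j)); rewrite /= ?ffunE ?E0 ?Ej ?eqxx ?pq //=.
by case E: (x ord0); rewrite ?ffunE E.
Qed.
End Oracle.

Lemma MM_prob f (hf : forall x, f x = f (bnot x)) x :
  outcome_prob (MM f) (f x) (apply_oracle x psi) = 1.
Proof.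
rewrite /outcome_prob /qform /MM qform_rows.
under eq_bigr do rewrite Yz Ysq.
rewrite (bigD1 (ttf x)) //= big1 ?addr0; last by move=> z /negbTE ->; rewrite mulr0.
rewrite eqxx mulr1 decode_tt.
by case: (x ord0); rewrite -?hf eqxx.
Qed.
End Alg.

Local Close Scope ring_scope.

Theorem corollary7p4 (C : numClosedFieldType) (n : nat) (hn : (1 <= n)%N)
  (f : {ffun 'I_n -> bool} -> bool)
  (hf : forall x : {ffun 'I_n -> bool}, f x = f (bnot x)) :
  QEna_le C f (n - 1).
Proof.
case: n hn f hf => [//|m] _ f hf.
exists m; split; first by rewrite subn1.
exists 1%N, (@psi C m), (@MM C m f).
split; first exact: psi_unit.
split; first exact: MM_povm.
exact: MM_prob.
Qed.
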